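(* Let $q\in\mathbb{N}^+$, let $G=(V,E)$ be a finite $(q+1)$-regular graph (multi-edges and loops allowed), let $\mathcal G$ be a subgroup of the unitary group $U(N)$, and let $\sigma$ be a $\mathcal G$-color on $G$. Then for every $r\in\mathbb{N}$, $$A^\sigma_r=q^{r/2}X_{r,q}(q^{-1/2}A^\sigma).$$
   Context: Each element of $E$ gives two distinct directed edges $e,\overline e$ (mutually inverse), forming $\vec E$, with origin $o(e)$ and terminus $t(e)$; $(q+1)$-regular means every vertex is the origin of exactly $q+1$ directed edges. A walk of length $n\ge1$ is a sequence of directed edges $e_1,\dots,e_n$ with $t(e_i)=o(e_{i+1})$; it is non-backtracking if $e_{i+1}\neq\overline{e_i}$ for all $i$. A $\mathcal G$-color is a map $\sigma:\vec E\to\mathcal G$ with $\sigma(\overline e)=\sigma(e)^{-1}$; the color of a walk $\gamma=(e_1,\dots,e_n)$ is $\sigma_\gamma=\sigma(e_1)\sigma(e_2)\cdots\sigma(e_n)$. $A^\sigma$ is the $N|V|\times N|V|$ block matrix with $N\times N$ blocks $(A^\sigma)_{ij}=\sum_{e\in\vec E: o(e)=i,t(e)=j}\sigma(e)$ (zero block if none). The colored non-backtracking matrix $A^\sigma_r$ is the block matrix with $(A^\sigma_r)_{ij}=\sum_{\gamma}\sigma_\gamma$, summed over all non-backtracking walks $\gamma$ of length $r$ from $i$ to $j$, for $r\ge1$, and $A^\sigma_0=I$. The polynomials $X_{r,q}$ are defined by $\sum_{r\ge0}X_{r,q}(x)t^r=\frac{1-q^{-1}t^2}{1-xt+t^2}$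 for $|t|$ small; explicitly $X_{r,q}=X_r-q^{-1}X_{r-2}$ with $X_r(x)=\sum_{0\le k\le r/2}(-1)^k\binom{r-k}{k}x^{r-2k}$ and $X_r\equiv0$ for $r<0$. *)

(* Defs.v *)
From HB Require Import structures.
From mathcomp Require Import all_boot all_order all_algebra all_field.
From mathcomp Require Import spectral.
Set Implicit Arguments. Unset Strict Implicit. Unset Printing Implicit Defensive.
Import Order.TTheory GRing.Theory Num.Theory.
Local Open Scope ring_scope.

(* Graph with vertex set 'I_n, finite type D of directed edges, the edge
   reversal inv (e |-> \overline e), and the origin map o.  The terminus is
   t e := o (inv e). *)
Section Graph.
Variables (n : nat) (D : finType) (inv : D -> D) (o : D -> 'I_n).

Definition term (e : D) : 'I_n := o (inv e).

Definition graph_ok : Prop := involutive inv /\ forall e, inv e != e.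

Definition regular (q : nat) : Prop := forall v : 'I_n, #|[set e | o e == v]| = q.+1.

Definition nbstep (e f : D) : bool := (term e == o f) && (f != inv e).

Definition nbwalk_from_to (i j : 'I_n) (s : seq D) : bool :=
  if s is e :: s' then [&& path nbstep e s', o e == i & term (last e s') == j]
  else false.

Variable N : nat.

Definition colored_adj (sigma : D -> 'M[algC]_N) : 'M[algC]_(\sum_(i < n) N) :=
  @mxblock algC n n (fun=> N) (fun=> N)
    (fun i j => \sum_(e : D | (o e == i) && (term e == j)) sigma e).

Definition colored_nb (sigma : D -> 'M[algC]_N) (r : nat) : 'M[algC]_(\sum_(i < n) N) :=
  if r is 0 then 1%:M else
  @mxblock algC n n (fun=> N) (fun=> N)
    (fun i j => \sum_(w : r.-tuple D | nbwalk_from_to i j w) \prod_(e <- w) sigma e).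

End Graph.

Definition unitary_subgroup N (Gs : {pred 'M[algC]_N}) : Prop :=
  [/\ 1%:M \in Gs,
      {in Gs &, forall A B, A *m B \in Gs},
      {in Gs, forall A, invmx A \in Gs} &
      {subset Gs <= unitarymx}].

Definition is_color (D : finType) (inv : D -> D) N (Gs : {pred 'M[algC]_N})
  (sigma : D -> 'M[algC]_N) : Prop :=
  (forall e, sigma e \in Gs) /\ (forall e, sigma (inv e) = invmx (sigma e)).

Definition Xpoly (r : nat) : {poly algC} :=
  \sum_(k < r./2.+1) (((-1) ^+ k * ('C(r - k, k))%:R) *: 'X^(r - k.*2)).

Definition Xrq (q r : nat) : {poly algC} :=
  Xpoly r - (q%:R)^-1 *: (if r is r'.+2 then Xpoly r' else 0).

Definition mxpeval m (p : {poly algC}) (A : 'M[algC]_m) : 'M[algC]_m :=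
  \sum_(i < size p) p`_i *: A ^+ i.

(* Main.v *)
Require Import Defs.
From HB Require Import structures.
From mathcomp Require Import all_boot all_order all_algebra all_field.
From mathcomp Require Import spectral zify ring.
Import Order.TTheory GRing.Theory Num.Theory.
Local Open Scope ring_scope.
Set Implicit Arguments. Unset Strict Implicit. Unset Printing Implicit Defensive.
Definition cX (r k : nat) : algC := (-1) ^+ k * ('C(r - k, k))%:R.

Lemma cX_small r k : (r < k.*2)%N -> cX r k = 0.
Proof. move=> h; rewrite /cX bin_small ?mulr0 //; lia. Qed.

Lemma cX0 r : cX r 0 = 1.
Proof. by rewrite /cX expr0 bin0 mul1r. Qed.

Lemma XpolyE r K : (r./2 < K)%N -> Xpoly r = \sum_(k < K) cX r k *: 'X^(r - k.*2).
Proof.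
move=> hK; rewrite /Xpoly (big_ord_widen K (fun k => cX r k *: 'X^(r - k.*2)) hK).
rewrite big_mkcond /=; apply: eq_bigr => k _; case: ifP => // /negbT.
rewrite -leqNgt => hk; rewrite cX_small ?scale0r //.
have := odd_double_half r; lia.
Qed.

Lemma cX_rec r k : cX r.+2 k.+1 = cX r.+1 k.+1 - cX r k.
Proof.
rewrite /cX !subSS exprS.
case: (leqP k r) => hk.
  rewrite subSn // binS natrD; ring.
have -> : (r.+1 - k = 0)%N by lia.
have -> : (r - k = 0)%N by lia.
rewrite !bin0n; have -> : (k == 0%N) = false by lia.
by rewrite /= mulr0 mulr0 subr0.
Qed.

Lemma Xpoly_rec r : Xpoly r.+2 = 'X * Xpoly r.+1 - Xpoly r.
Proof.
have h2 : forall m, (m./2 < m.+1)%N by move=> m; have := odd_double_half m; lia.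
rewrite (XpolyE (K:=r.+3)) ?(XpolyE (r:=r.+1) (K:=r.+3)) ?(XpolyE (r:=r) (K:=r.+2)) //; try lia.
rewrite mulr_sumr big_ord_recl [in RHS]big_ord_recl /= -addrA -sumrB; congr (_ + _).
  by rewrite !cX0 !scale1r !subn0 exprS.
apply: eq_bigr => k _ /=.
rewrite cX_rec scalerBl.
rewrite /bump /= ?add1n.
have -> : (r.+2 - k.+1.*2 = r - k.*2)%N by lia.
congr (_ - _).
case: (leqP k.+1.*2 r.+1) => hk.
  rewrite -scalerAr -exprS; congr (_ *: 'X^_); lia.
by rewrite cX_small ?scale0r ?mulr0.
Qed.

Lemma Xpoly0 : Xpoly 0 = 1.
Proof. by rewrite (XpolyE (K:=1)) // big_ord1 cX0 scale1r. Qed.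
Lemma Xpoly1 : Xpoly 1 = 'X.
Proof. by rewrite (XpolyE (K:=1)) // big_ord1 cX0 scale1r. Qed.

Definition Xm (r : nat) : {poly algC} := if r is r'.+2 then Xpoly r' else 0.

Lemma XrqE q r : Xrq q r = Xpoly r - (q%:R)^-1 *: Xm r.
Proof. by []. Qed.

Lemma Xm_rec r : Xm r.+3 = 'X * Xm r.+2 - Xm r.+1.
Proof. case: r => [|r] /=; first by rewrite Xpoly1 Xpoly0 mulr1 subr0. exact: Xpoly_rec. Qed.

Lemma Xrq_rec q r : Xrq q r.+3 = 'X * Xrq q r.+2 - Xrq q r.+1.
Proof.
rewrite !XrqE Xm_rec Xpoly_rec -!mul_polyC; ring.
Qed.

Lemma Xrq0 q : Xrq q 0 = 1.
Proof. by rewrite XrqE /= Xpoly0 scaler0 subr0. Qed.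
Lemma Xrq1 q : Xrq q 1 = 'X.
Proof. by rewrite XrqE /= Xpoly1 scaler0 subr0. Qed.
Lemma Xrq2 q : Xrq q 2 = 'X * 'X - 1 - (q%:R)^-1 *: 1.
Proof. by rewrite XrqE /= Xpoly_rec Xpoly1 Xpoly0. Qed.

Section Eval.
Variables (m : nat) (M : 'M[algC]_m).
Local Notation ev p := (mxpeval p M).

Lemma evE K (p : {poly algC}) : (size p <= K)%N -> ev p = \sum_(i < K) p`_i *: M ^+ i.
Proof.
move=> hK; rewrite /mxpeval (big_ord_widen K (fun i => p`_i *: M ^+ i) hK).
rewrite big_mkcond /=; apply: eq_bigr => i _; case: ifP => // /negbT.
by rewrite -leqNgt => hi; rewrite nth_default ?scale0r.
Qed.

Lemma ev_lin a b (p p' : {poly algC}) : ev (a *: p + b *: p') = a *: ev p + b *: ev p'.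
Proof.
set K := maxn (size p) (size p').
have h : (size (a *: p + b *: p')%R <= K)%N.
  apply: leq_trans (size_polyD _ _) _; rewrite geq_max.
  by rewrite (leq_trans (size_scale_leq _ _)) ?leq_maxl // (leq_trans (size_scale_leq _ _)) ?leq_maxr.
rewrite (evE h) (evE (K:=K) (p:=p)) ?leq_maxl // (evE (K:=K) (p:=p')) ?leq_maxr //.
rewrite !scaler_sumr -big_split /=; apply: eq_bigr => i _.
by rewrite coefD !coefZ !scalerA -scalerDl.
Qed.

Lemma evB (p p' : {poly algC}) : ev (p - p') = ev p - ev p'.
Proof. by have := ev_lin 1 (-1) p p'; rewrite !scale1r !scaleN1r. Qed.

Lemma evZ a (p : {poly algC}) : ev (a *: p) = a *: ev p.
Proof. by have := ev_lin a 0 p 0; rewrite !scale0r !addr0. Qed.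

Lemma evX (p : {poly algC}) : ev ('X * p) = M * ev p.
Proof.
have h : (size ('X * p)%R <= (size p).+1)%N.
  by rewrite mulrC; case: (eqVneq p 0) => [->|hp]; rewrite ?mul0r ?size_poly0 // size_mulX.
rewrite (evE h) big_ord_recl coefXM /= scale0r add0r /mxpeval mulr_sumr.
apply: eq_bigr => i _; rewrite coefXM /= exprS.
by rewrite add0n -!mulmxE scalemxAr.
Qed.

Lemma ev1 : ev 1 = 1.
Proof. by rewrite /mxpeval size_poly1 big_ord1 coefC /= expr0 scale1r. Qed.
End Eval.
Lemma big_tuple_cons (V : nmodType) (D : finType) r (F : r.+1.-tuple D -> V) :
  \sum_(s : r.+1.-tuple D) F s = \sum_(f : D) \sum_(s : r.-tuple D) F (cons_tuple f s).
Proof.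
rewrite pair_big /=.
rewrite (reindex (fun p : D * r.-tuple D => cons_tuple p.1 p.2)) //=.
exists (fun t : r.+1.-tuple D => (thead t, behead_tuple t)).
  move=> [f s] _ /=; congr pair; last exact: val_inj.
move=> t _ /=; exact: (esym (tuple_eta t)).
Qed.

Section Comb.
Variables (n : nat) (D : finType) (inv : D -> D) (o : D -> 'I_n) (N : nat)
  (sigma : D -> 'M[algC]_N) (q : nat).
Hypothesis inv_inv : involutive inv.
Hypothesis sig_inv : forall e, sigma e * sigma (inv e) = 1.
Hypothesis reg : forall v, #|[set e | o e == v]| = q.+1.

Local Notation t := (term inv o).
Local Notation nbs := (nbstep inv o).

Fixpoint G r e k : 'M[algC]_N :=
  if r is r'.+1 then sigma e * \sum_(f | nbs e f) G r' f k
  else (if t e == k then sigma e else 0).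

Lemma G_tuple r e k :
  \sum_(s : r.-tuple D | path nbs e s && (t (last e s) == k)) \prod_(x <- e :: s) sigma x
  = G r e k.
Proof.
elim: r e => [|r IH] e /=.
  rewrite big_mkcond (big_pred1 [tuple]) /=; last by move=> s; apply/esym/eqP/tuple0.
  by rewrite big_cons big_nil mulr1; case: ifP.
rewrite big_mkcond big_tuple_cons /= mulr_sumr.
rewrite [RHS]big_mkcond; apply: eq_bigr => f _ /=.
case: (boolP (nbs e f)) => hef /=; last by rewrite big1.
rewrite -IH mulr_sumr [RHS]big_mkcond; apply: eq_bigr => s _ /=.
by case: ifP => _; rewrite ?mulr0 // !big_cons.
Qed.

Lemma nb_block r : colored_nb inv o sigma r.+1 =
  \mxblock_(i, k) \sum_(e | o e == i) G r e k.
Proof.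
rewrite /colored_nb; apply: eq_mxblock => i k.
rewrite big_mkcond big_tuple_cons [RHS]big_mkcond.
change (\sum_(f : D) \sum_(s : r.-tuple D) (if nbwalk_from_to inv o i k (cons_tuple f s) then \prod_(e <- cons_tuple f s) sigma e else 0) = \sum_(e : D) (if o e == i then G r e k else 0)).
apply: eq_bigr => e _ /=.
rewrite -G_tuple big_mkcond.
case: (eqVneq (o e) i) => hoe /=; last by rewrite big1 // => s _; rewrite andbF.
by rewrite [RHS]big_mkcond.
Qed.

Lemma adj_block : colored_adj inv o sigma =
  \mxblock_(i, k) \sum_(e | o e == i) G 0 e k.
Proof.
rewrite /colored_adj; apply: eq_mxblock => i k.
by rewrite big_mkcondr.
Qed.

Lemma sum_term (H : D -> 'I_n -> 'M[algC]_N) (P : pred D) :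
  \sum_j \sum_(e | P e && (t e == j)) H e j = \sum_(e | P e) H e (t e).
Proof.
rewrite [RHS](partition_big t predT) //=; apply: eq_bigr => j _.
by apply: eq_bigr => e /andP[_ /eqP ->].
Qed.

Lemma key_step r i k :
  \sum_j ((\sum_(e | (o e == i) && (t e == j)) sigma e) *m
          (\sum_(f | o f == j) G r f k))
  = \sum_(e | o e == i) G r.+1 e k + \sum_(e | o e == i) sigma e * G r (inv e) k.
Proof.
under eq_bigr do rewrite mulmxE mulr_suml.
rewrite sum_term -big_split /=; apply: eq_bigr => e _.
rewrite -mulrDr; congr (_ * _).
rewrite (bigD1 (inv e)) /=; last by rewrite /term.
rewrite addrC; congr (_ + _); apply: eq_bigl => f.
by rewrite /nbstep eq_sym.
Qed.

Lemma back0 i k : \sum_(e | o e == i) sigma e * G 0 (inv e) k =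
  if i == k then (q.+1)%:R else 0.
Proof.
transitivity (\sum_(e | o e == i) (if i == k then 1 else 0 : 'M[algC]_N)).
  apply: eq_bigr => e /eqP hoe /=.
  rewrite /term inv_inv hoe; case: ifP => _; by rewrite ?sig_inv ?mulr0.
case: ifP => _; last by rewrite big1.
rewrite (eq_bigl (fun e => e \in [set e | o e == i])) ?sumr_const ?reg //.
by move=> e; rewrite inE.
Qed.

Lemma backS r i k : \sum_(e | o e == i) sigma e * G r.+1 (inv e) k =
  (\sum_(f | o f == i) G r f k) *+ q.
Proof.
transitivity (\sum_(e | o e == i) \sum_(f | (o f == i) && (f != e)) G r f k).
  apply: eq_bigr => e /eqP hoe /=.
  rewrite mulrA sig_inv mul1r; apply: eq_bigl => f.
  by rewrite /nbstep /term !inv_inv hoe eq_sym.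
rewrite (exchange_big_dep (fun f => o f == i)) /=; last by move=> e f _ /andP[].
rewrite -sumrMnl; apply: eq_bigr => f /eqP hof.
rewrite (eq_bigl (fun e => e \in [set e | o e == i] :\ f)); last first.
  by move=> e /=; rewrite !inE hof eqxx /=; case: (o e == i); rewrite ?andbT ?andbF // eq_sym.
rewrite sumr_const; congr (_ *+ _).
by have := cardsD1 f [set e | o e == i]; rewrite reg inE hof eqxx /= add1n => -[].
Qed.

Lemma mxblockMn (B : 'I_n -> 'I_n -> 'M[algC]_N) m :
  \mxblock_(i, k) (B i k *+ m) = (\mxblock_(i, k) B i k : 'M_(\sum_(i < n) N, \sum_(i < n) N)) *+ m.
Proof.
elim: m => [|m IH]; first by rewrite mulr0n -mxblock0; apply: eq_mxblock => i k; rewrite mulr0n.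
rewrite mulrS -IH -mxblockD; apply: eq_mxblock => i k; by rewrite mulrS.
Qed.

Lemma scalar_block (a : algC) :
  (a%:M : 'M_(\sum_(i < n) N)) = \mxblock_(i, k) (if i == k then a%:M else 0 : 'M_N).
Proof.
rewrite -(mxdiagZ (p_ := fun=> N)) /mxdiag; apply: eq_mxblock => i k.
by case: ifP => _ //; rewrite conform_mx_id.
Qed.

Lemma nb1 : colored_nb inv o sigma 1 = colored_adj inv o sigma.
Proof. by rewrite nb_block adj_block. Qed.

Lemma L3 : colored_adj inv o sigma *m colored_nb inv o sigma 1 =
  colored_nb inv o sigma 2 + (q.+1)%:R%:M.
Proof.
rewrite !nb_block /colored_adj mul_mxblock scalar_block -mxblockD.
apply: eq_mxblock => i k.
rewrite key_step back0; congr (_ + _); case: ifP => // _.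
by rewrite -scalemx1 scaler_nat.
Qed.


Lemma L4 r : colored_adj inv o sigma *m colored_nb inv o sigma r.+2 =
  colored_nb inv o sigma r.+3 + colored_nb inv o sigma r.+1 *+ q.
Proof.
rewrite !nb_block /colored_adj mul_mxblock -mxblockMn -mxblockD.
apply: eq_mxblock => i k.
by rewrite key_step backS.
Qed.
End Comb.

Lemma evXX m (M : 'M[algC]_m) : mxpeval 'X M = M.
Proof. by rewrite -(mulr1 'X) evX ev1 mulr1. Qed.


Theorem lemma3p1 (q : nat) (n : nat) (D : finType) (inv : D -> D) (o : D -> 'I_n)
  (N : nat) (Gs : {pred 'M[algC]_N}) (sigma : D -> 'M[algC]_N) :
  (0 < q)%N ->
  graph_ok inv ->
  regular o q ->
  unitary_subgroup Gs ->
  is_color inv Gs sigma ->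
  forall r : nat,
    colored_nb inv o sigma r =
    (sqrtC (q%:R : algC)) ^+ r *:
      mxpeval (Xrq q r) ((sqrtC (q%:R : algC))^-1 *: colored_adj inv o sigma).
Proof.
move=> q0 [invK _] reg [_ _ _ Gu] [sG sinv].
have sig_inv : forall e, sigma e * sigma (inv e) = 1.
  by move=> e; rewrite sinv -mulmxE mulmxV //; exact: unitarymx_unit (Gu _ (sG e)).
set s := sqrtC (q%:R : algC).
set A := colored_adj inv o sigma.
have s0 : s != 0 by rewrite sqrtC_eq0 pnatr_eq0 -lt0n.
have s2 : s ^+ 2 = q%:R by rewrite sqrtCK.
pose P r := s ^+ r *: mxpeval (Xrq q r) (s^-1 *: A).
have P0 : P 0 = 1%:M by rewrite /P Xrq0 ev1 expr0 scale1r.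
have P1 : P 1 = A by rewrite /P Xrq1 evXX expr1 scalerA mulfV // scale1r.
have P2 : P 2 = A *m A - (q.+1)%:R%:M.
  rewrite /P Xrq2 !evB evZ evX evXX ev1.
  have qn0 : (q%:R : algC) != 0 by rewrite pnatr_eq0 -lt0n.
  rewrite !scalerBr -mulmxE -scalemxAl -scalemxAr !scalerA.
  have -> : s ^+ 2 / s / s = 1 by rewrite expr2 mulfK // mulfV.
  rewrite s2 mulfV // !scale1r -addrA -opprD; congr (_ - _).
  by rewrite -scalemx1 -natr1 scalerDl scale1r.
have P3 : forall r, P r.+3 = A *m P r.+2 - P r.+1 *+ q.
  move=> r; rewrite /P Xrq_rec evB evX.
  rewrite scalerBr -mulmxE -scalemxAl scalerA -scalemxAr -scaler_nat scalerA.
  congr (_ *: _ - _ *: _); first by rewrite exprSr mulfK.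
  by rewrite -s2 -exprD.
suff: forall r, colored_nb inv o sigma r = P r /\ colored_nb inv o sigma r.+1 = P r.+1.
  by move=> h r; case: (h r).
elim => [|r [IH1 IH2]]; first by split; [rewrite P0 | rewrite nb1 P1].
split => //; case: r IH1 IH2 => [|r] IH1 IH2.
  have := L3 invK sig_inv reg; rewrite nb1 -/A => h; by rewrite P2 h addrK.
rewrite P3 -IH1 -IH2 (L4 invK sig_inv reg) addrK //.
Qed.
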